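(* Let $T$ be a finite rooted tree in which every inner node has at least two children, with node set $V$ and leaf set $L$. There exists a family of four bi-colourings $(A_1,B_1),\dots,(A_4,B_4)$ of $L$ identifying $T$.
   Context: A bi-colouring is a pair $(A,B)$ of disjoint subsets of $L$ of equal cardinality. A pair $(\pi,\sigma)$ of injective maps from $S\subseteq V\setminus L$ to $L$ identifies $S$ if for each $s\in S$, $s$ is the least common ancestor of $\pi(s)$ and $\sigma(s)$ (every node is its own ancestor); for $s\in S$ a node $x$ is $s$-requested if it lies on the path from $\pi(s)$ to $\sigma(s)$; the pair has unique request if every node is $s$-requested for at most one $s\in S$. A bi-colouring $(A,B)$ identifies $S$ if some pair $(\pi,\sigma)$ identifying $S$ with unique request has $\pi(S)=A$, $\sigma(S)=B$. A family $(A_1,B_1),\dots,(A_n,B_n)$ of bi-colourings identifies $S$ if there is a partition $(S_1,\dots,S_n)$ of $S$ (parts possibly empty) with $(A_i,B_i)$ identifying $S_i$ for each $i$; it identifies $T$ if it identifies $V\setminus L$. The sets $A_i$, $A_j$, $B_j$ for $i\neq j$ need not be disjoint. *)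

(* Defs.v *)
From mathcomp Require Import all_boot.
Set Implicit Arguments. Unset Strict Implicit. Unset Printing Implicit Defensive.

Section Trees.
Variables (V : finType) (r : V) (p : V -> V).

(* (r, p) is a finite rooted tree with root r: the root is its own parent
   and every node reaches the root by iterating the parent map (this forces
   acyclicity). *)
Definition rooted_tree : Prop := p r = r /\ forall v, exists k, iter k p v = r.

Definition ancestor (u v : V) : Prop := exists k, iter k p v = u.

Definition children (u : V) : {set V} := [set v | (v != r) && (p v == u)].

Definition leaves : {set V} := [set u | children u == set0].

Definition inner : {set V} := ~: leaves.

Definition is_lca (a b s : V) : Prop :=
  [/\ ancestor s a, ancestor s b &
      forall t, ancestor t a -> ancestor t b -> ancestor t s].

(* z lies on the (tree) path from a to b: z is an ancestor of a or of b,
   and lies below (or at) every common ancestor of a and b. *)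
Definition on_path (a b z : V) : Prop :=
  (ancestor z a \/ ancestor z b) /\
  forall t, ancestor t a -> ancestor t b -> ancestor t z.

Definition bicolouring (A B : {set V}) : Prop :=
  [/\ A \subset leaves, B \subset leaves, [disjoint A & B] & #|A| = #|B|].

Definition pair_identifies (S : {set V}) (pi sigma : V -> V) : Prop :=
  [/\ {in S &, injective pi}, {in S &, injective sigma},
      (forall s, s \in S ->
         [/\ pi s \in leaves, sigma s \in leaves & is_lca (pi s) (sigma s) s])
    &
      forall x s1 s2, s1 \in S -> s2 \in S ->
        on_path (pi s1) (sigma s1) x -> on_path (pi s2) (sigma s2) x ->
        s1 = s2].

Definition bicol_identifies (A B S : {set V}) : Prop :=
  S \subset inner /\
  exists pi sigma : V -> V,
    [/\ pair_identifies S pi sigma, pi @: S = A & sigma @: S = B].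

Definition family_identifies (n : nat) (A B : 'I_n -> {set V}) (S : {set V})
  : Prop :=
  exists P : 'I_n -> {set V},
    [/\ forall i j, i != j -> [disjoint P i & P j],
        \bigcup_(i < n) P i = S &
        forall i, bicol_identifies (A i) (B i) (P i)].

Definition family_identifies_tree (n : nat) (A B : 'I_n -> {set V}) : Prop :=
  family_identifies A B inner.

End Trees.

(* Main.v *)
Require Import Defs.
From mathcomp Require Import all_boot.
Set Implicit Arguments. Unset Strict Implicit. Unset Printing Implicit Defensive.

Lemma iter_root (V : finType) (r : V) (p : V -> V) : p r = r -> forall n, iter n p r = r.
Proof. by move=> h; elim=> //= n ->. Qed.

Lemma iterN (V : finType) (r : V) (p : V -> V) :
  rooted_tree r p -> forall u, iter #|V| p u = r.
Proof.
move=> [hr hreach] u; have [k hk] := hreach u.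
have hc : fconnect p u r by rewrite -hk; apply: fconnect_iter.
have h1 := iter_findex hc; have h2 := findex_max hc.
have h3 : findex p u r <= #|V| by apply: leq_trans (ltnW h2) (max_card _).
by rewrite -(subnK h3) iterD h1 iter_root.
Qed.

Lemma anc_refl (V : finType) (p : V -> V) u : ancestor p u u.
Proof. by exists 0. Qed.

Lemma anc_trans (V : finType) (p : V -> V) a b c :
  ancestor p a b -> ancestor p b c -> ancestor p a c.
Proof. by move=> [k hk] [m hm]; exists (k + m); rewrite iterD hm. Qed.

Lemma anc_parent (V : finType) (p : V -> V) c : ancestor p (p c) c.
Proof. by exists 1. Qed.

Lemma anc_inv (V : finType) (p : V -> V) y c :
  ancestor p y c -> y = c \/ ancestor p y (p c).
Proof. by move=> [[|k] hk]; [left | right; exists k; rewrite -iterSr]. Qed.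

Lemma anc_total (V : finType) (p : V -> V) a b x :
  ancestor p a x -> ancestor p b x -> ancestor p a b \/ ancestor p b a.
Proof.
move=> [k hk] [m hm]; case: (leqP k m) => h.
  by right; exists (m - k); rewrite -hk -iterD subnK.
by left; exists (k - m); rewrite -hm -iterD subnK // ltnW.
Qed.

Lemma iter_mul (V : finType) (p : V -> V) n b :
  iter n p b = b -> forall j, iter (n * j) p b = b.
Proof. by move=> h; elim=> [|j IH]; rewrite ?muln0 // mulnS iterD IH. Qed.

Lemma anc_antisym (V : finType) (r : V) (p : V -> V) a b :
  rooted_tree r p -> ancestor p a b -> ancestor p b a -> a = b.
Proof.
move=> ht [k hk] [m hm].
have hn : iter (m + k) p b = b by rewrite iterD hk.
case: (posnP (m + k)) => hpos.
  by move/eqP: hpos; rewrite addn_eq0 => /andP[_ /eqP k0]; rewrite -hk k0.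
have hb := iter_mul hn #|V|.
have hge : #|V| <= (m + k) * #|V| by rewrite leq_pmull.
have hbr : b = r.
  by rewrite -hb -(subnK hge) iterD (iterN ht) iter_root //; case: ht.
by rewrite -hk hbr iter_root //; case: ht.
Qed.

Lemma fix_root (V : finType) (r : V) (p : V -> V) w :
  rooted_tree r p -> p w = w -> w = r.
Proof.
move=> [hr hreach] hw; have [k hk] := hreach w.
have : iter k p w = w by elim: k {hk} => //= k ->.
by rewrite hk.
Qed.

Lemma nchild (V : finType) (r : V) (p : V -> V) c :
  rooted_tree r p -> c != r -> ~ ancestor p c (p c).
Proof.
move=> ht hc ha; have e := anc_antisym ht ha (anc_parent p c).
by move: hc; rewrite (fix_root ht (esym e)) eqxx.
Qed.

Definition isH (V : finType) (r : V) (p h : V -> V) (u : V) : bool :=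
  (u != r) && (u == h (p u)).
Definition cnt (V : finType) (r : V) (p h : V -> V) (v : V) : nat :=
  count (isH r p h) (traject p v #|V|.+1).

Lemma cntS (V : finType) (r : V) (p h : V -> V) c :
  rooted_tree r p -> c != r -> cnt r p h c = isH r p h c + cnt r p h (p c).
Proof.
move=> ht hc; rewrite /cnt.
have -> : traject p c #|V|.+1 = c :: traject p (p c) #|V| by [].
rewrite [in RHS]trajectSr -cats1 count_cat (iterN ht).
have -> : count (isH r p h) [:: r] = 0 by rewrite /= /isH eqxx.
by rewrite addn0.
Qed.

Definition ancset (V : finType) (p : V -> V) (u : V) : {set V} :=
  [set x | x \in traject p u #|V|.+1].

Lemma ancsetP (V : finType) (r : V) (p : V -> V) u x :
  rooted_tree r p -> (x \in ancset p u) <-> ancestor p x u.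
Proof.
move=> ht; rewrite inE; split.
  by move/trajectP=> [i _ ->]; exists i.
move=> [k hk]; apply/trajectP; case: (leqP k #|V|) => h.
  by exists k.
exists #|V| => //; rewrite (iterN ht) -hk -(subnK (ltnW h)) iterD (iterN ht).
by rewrite iter_root //; case: ht.
Qed.

Lemma ancset_lt (V : finType) (r : V) (p : V -> V) c :
  rooted_tree r p -> c != r -> #|ancset p (p c)| < #|ancset p c|.
Proof.
move=> ht hc; apply: proper_card; apply/properP; split.
  apply/subsetP => x /(ancsetP _ _ ht) hx; apply/(ancsetP _ _ ht).
  exact: anc_trans hx (anc_parent p c).
exists c; first by apply/(ancsetP _ _ ht); apply: anc_refl.
by apply/negP => /(ancsetP _ _ ht); apply: (nchild ht hc).
Qed.

Definition step (V : finType) (r : V) (p h : V -> V) (v : V) : V :=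
  if v \in leaves r p then v else h v.

Definition desc (V : finType) (r : V) (p h : V -> V) (u : V) : V :=
  iter #|V| (step r p h) u.

Lemma inner_child (V : finType) (r : V) (p h : V -> V) w :
  w \in inner r p -> h w \in children r p w -> h w != r /\ p (h w) = w.
Proof. by move=> _; rewrite inE => /andP[-> /eqP]. Qed.

Lemma desc_leaf (V : finType) (r : V) (p h : V -> V) :
  rooted_tree r p ->
  (forall w, w \in inner r p -> h w \in children r p w) ->
  forall u, desc r p h u \in leaves r p.
Proof.
move=> ht hh.
suff H : forall n u, #|V| < n + #|ancset p u| -> iter n (step r p h) u \in leaves r p.
  move=> u; apply: H; rewrite -[X in X < _]addn0 ltn_add2l card_gt0.
  by apply/set0Pn; exists u; apply/(ancsetP _ _ ht); apply: anc_refl.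
elim=> [|n IH] u hu.
  by move: hu; rewrite add0n ltnNge max_card.
case hl: (u \in leaves r p).
  have -> : iter n.+1 (step r p h) u = u.
    by elim: n.+1 => //= k ->; rewrite /step hl.
  by [].
rewrite iterSr {2}/step hl; apply: IH.
have hin : u \in inner r p by rewrite inE hl.
have [hc hp] := inner_child hin (hh u hin).
have := ancset_lt ht hc; rewrite hp => hlt.
by apply: leq_trans hu _; rewrite addSn -addnS leq_add2l.
Qed.

Definition good (V : finType) (r : V) (p h1 h2 : V -> V) : Prop :=
  forall w, w \in inner r p ->
    [/\ h1 w \in children r p w, h2 w \in children r p w & h1 w != h2 w].

Lemma arm_inv (V : finType) (r : V) (p h1 h2 : V -> V) s :
  rooted_tree r p -> good r p h1 h2 -> s \in inner r p ->
  forall n, let z := iter n (step r p h2) (h1 s) in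
  ancestor p (h1 s) z /\
  forall y, ancestor p y z -> ancestor p s y -> y <> s ->
    cnt r p h1 y = (cnt r p h1 s).+1 /\ ancestor p (h1 s) y.
Proof.
move=> ht hg hs; have [c1 _ _] := hg s hs.
have [c1r c1p] := inner_child hs c1.
have ns : ~ ancestor p (h1 s) s by rewrite -{2}c1p; apply: (nchild ht c1r).
elim=> [|n IH] /=.
  split; first exact: anc_refl.
  move=> y /anc_inv [-> _ _ | ].
    split; last exact: anc_refl.
    by rewrite (cntS _ ht c1r) c1p /isH c1r c1p eqxx.
  by rewrite c1p => a1 a2 a3; case: a3; apply: anc_antisym ht a1 a2.
move: IH; set z := iter n _ _ => -[IH1 IH2].
rewrite /step; case: ifP => hl; first by split.
have hz : z \in inner r p by rewrite inE hl.
have [_ c2 d] := hg z hz.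
have [c2r c2p] := inner_child hz c2.
have az : ancestor p z (h2 z) by rewrite -{1}c2p; apply: anc_parent.
split; first exact: anc_trans IH1 az.
move=> y /anc_inv [-> hsy hys | ]; last by rewrite c2p; apply: IH2.
split; last exact: anc_trans IH1 az.
rewrite (cntS _ ht c2r) c2p.
have -> : isH r p h1 (h2 z) = false.
  by rewrite /isH c2p; apply/negbTE; rewrite negb_and; apply/orP; right; rewrite eq_sym.
have hsz : ancestor p s z by apply: anc_trans IH1; rewrite -{1}c1p; apply: anc_parent.
have hzs : z <> s by move=> e; apply: ns; rewrite -{2}e.
by have [-> _] := IH2 z (anc_refl p z) hsz hzs.
Qed.

Definition arm (V : finType) (r : V) (p h1 h2 : V -> V) (s : V) : V :=
  desc r p h2 (h1 s).

Lemma good_sym (V : finType) (r : V) (p h1 h2 : V -> V) :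
  good r p h1 h2 -> good r p h2 h1.
Proof. by move=> hg w hw; have [a b c] := hg w hw; split => //; rewrite eq_sym. Qed.

Lemma arm_props (V : finType) (r : V) (p h1 h2 : V -> V) s :
  rooted_tree r p -> good r p h1 h2 -> s \in inner r p ->
  [/\ arm r p h1 h2 s \in leaves r p, ancestor p s (arm r p h1 h2 s),
      ancestor p (h1 s) (arm r p h1 h2 s) &
      forall y, ancestor p y (arm r p h1 h2 s) -> ancestor p s y -> y <> s ->
        cnt r p h1 y = (cnt r p h1 s).+1 /\ ancestor p (h1 s) y].
Proof.
move=> ht hg hs; have [a1 a2] := arm_inv ht hg hs #|V|.
have [c1 _ _] := hg s hs; have [_ c1p] := inner_child hs c1.
split => //.
- by apply: desc_leaf => // w hw; have [] := hg w hw.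
- by apply: anc_trans a1; rewrite -{1}c1p; apply: anc_parent.
Qed.

Lemma two_children (V : finType) (r : V) (p : V -> V) s c1 c2 :
  rooted_tree r p -> c1 \in children r p s -> c2 \in children r p s ->
  c1 != c2 -> ancestor p c1 c2 -> False.
Proof.
move=> ht; rewrite !inE => /andP[c1r /eqP c1p] /andP[c2r /eqP c2p] d.
move/anc_inv => [e | a]; first by rewrite e eqxx in d.
by apply: (nchild ht c1r); rewrite c1p -c2p.
Qed.

Lemma sep (V : finType) (r : V) (p f g : V -> V) s t :
  rooted_tree r p -> good r p f g -> s \in inner r p ->
  ancestor p (f s) t -> ancestor p (g s) t -> False.
Proof.
move=> ht hg hs a b; have [c1 c2 d] := hg s hs.
case: (anc_total a b) => h.
  exact: two_children ht c1 c2 d h.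
by apply: two_children ht c2 c1 _ h; rewrite eq_sym.
Qed.

Definition col (V : finType) (r : V) (p f g : V -> V) (s : V) : nat :=
  odd (cnt r p f s) + 2 * odd (cnt r p g s).

Lemma bool4 (b1 b2 c1 c2 : bool) : b1 + 2 * b2 = c1 + 2 * c2 -> b1 = c1 /\ b2 = c2.
Proof. by case: b1; case: b2; case: c1; case: c2. Qed.

Definition pi_ (V : finType) (r : V) (p f g : V -> V) := arm r p f g.
Definition sg_ (V : finType) (r : V) (p f g : V -> V) := arm r p g f.

Lemma key (V : finType) (r : V) (p f g : V -> V) s1 s2 :
  rooted_tree r p -> good r p f g -> s1 \in inner r p ->
  ancestor p s1 s2 -> s2 <> s1 ->
  ancestor p s2 (pi_ r p f g s1) \/ ancestor p s2 (sg_ r p f g s1) ->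
  col r p f g s1 <> col r p f g s2.
Proof.
move=> ht hg hs a n [h|h] /bool4 [e1 e2].
  have [_ _ _ H] := arm_props ht hg hs.
  have [e _] := H s2 h a n; move: e1; rewrite e /= => e1.
  by move: e1; case: (odd _).
have [_ _ _ H] := arm_props ht (good_sym hg) hs.
have [e _] := H s2 h a n; move: e2; rewrite e /= => e2.
by move: e2; case: (odd _).
Qed.

Lemma lca_ok (V : finType) (r : V) (p f g : V -> V) s :
  rooted_tree r p -> good r p f g -> s \in inner r p ->
  is_lca p (pi_ r p f g s) (sg_ r p f g s) s.
Proof.
move=> ht hg hs.
have [_ a1 _ H1] := arm_props ht hg hs.
have [_ a2 _ H2] := arm_props ht (good_sym hg) hs.
split => // t b1 b2.
case: (anc_total b1 a1) => // h.
case: (eqVneq t s) => [-> | d]; first exact: anc_refl.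
have [_ f1] := H1 t b1 h (elimN eqP d).
have [_ f2] := H2 t b2 h (elimN eqP d).
by case: (sep ht hg hs f1 f2).
Qed.

Lemma half (V : finType) (r : V) (p f g : V -> V) s1 s2 x :
  rooted_tree r p -> good r p f g -> s1 \in inner r p ->
  col r p f g s1 = col r p f g s2 ->
  ancestor p s1 s2 -> ancestor p s2 x ->
  on_path p (pi_ r p f g s1) (sg_ r p f g s1) x -> s1 = s2.
Proof.
move=> ht hg hs ec a b [o _].
case: (eqVneq s2 s1) => [-> // | d].
case: (key ht hg hs a (elimN eqP d) _ ec) => //.
by case: o => o; [left | right]; apply: anc_trans b o.
Qed.

Lemma UR (V : finType) (r : V) (p f g : V -> V) s1 s2 x :
  rooted_tree r p -> good r p f g -> s1 \in inner r p -> s2 \in inner r p ->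
  col r p f g s1 = col r p f g s2 ->
  on_path p (pi_ r p f g s1) (sg_ r p f g s1) x ->
  on_path p (pi_ r p f g s2) (sg_ r p f g s2) x -> s1 = s2.
Proof.
move=> ht hg h1 h2 ec o1 o2.
have [l1 l2 _] := lca_ok ht hg h1.
have [m1 m2 _] := lca_ok ht hg h2.
have b1 : ancestor p s1 x by case: o1 => _; apply.
have b2 : ancestor p s2 x by case: o2 => _; apply.
case: (anc_total b1 b2) => a.
  exact: half ht hg h1 ec a b2 o1.
by apply: esym; apply: half ht hg h2 (esym ec) a b1 o2.
Qed.

Lemma onpath_l (V : finType) (p : V -> V) a b : on_path p a b a.
Proof. by split; [left; apply: anc_refl | move=> t ha _]. Qed.
Lemma onpath_r (V : finType) (p : V -> V) a b : on_path p a b b.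
Proof. by split; [right; apply: anc_refl | move=> t _ hb]. Qed.

Definition chf (V : finType) (r : V) (p : V -> V) (w : V) : V :=
  odflt w [pick c in children r p w].
Definition chg (V : finType) (r : V) (p : V -> V) (w : V) : V :=
  odflt w [pick c in children r p w :\ chf r p w].

Lemma chfg_good (V : finType) (r : V) (p : V -> V) :
  (forall u, u \in inner r p -> 2 <= #|children r p u|) ->
  good r p (chf r p) (chg r p).
Proof.
move=> hd w hw; have h2 := hd w hw.
have hf : chf r p w \in children r p w.
  rewrite /chf; case: pickP => [c -> //| h0].
  by move: h2; rewrite (eq_card0 h0).
have h1 : 0 < #|children r p w :\ chf r p w|.
  by move: h2; rewrite (cardsD1 (chf r p w)) hf.
have [c hc] : exists c, c \in children r p w :\ chf r p w.
  by apply/set0Pn; rewrite -card_gt0.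
have hg : chg r p w \in children r p w :\ chf r p w.
  rewrite /chg; case: pickP => [c' -> //| h0].
  by rewrite h0 in hc.
by move: hg; rewrite in_setD1 => /andP[d ->]; rewrite eq_sym.
Qed.

Theorem corollary3p10 (V : finType) (r : V) (p : V -> V) :
  rooted_tree r p ->
  (forall u, u \in inner r p -> 2 <= #|children r p u|) ->
  exists A B : 'I_4 -> {set V},
    (forall i, bicolouring r p (A i) (B i)) /\
    family_identifies_tree r p A B.
Proof.
move=> ht hd; have hg := chfg_good hd.
set f := chf r p; set g := chg r p.
set P := fun i : 'I_4 => [set s in inner r p | col r p f g s == i].
set pi := pi_ r p f g; set sg := sg_ r p f g.
have PI : forall i s, s \in P i -> s \in inner r p.
  by move=> i s; rewrite inE => /andP[].
have Pcol : forall i s1 s2, s1 \in P i -> s2 \in P i -> col r p f g s1 = col r p f g s2.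
  by move=> i s1 s2; rewrite !inE => /andP[_ /eqP ->] /andP[_ /eqP ->].
have URi : forall i s1 s2 x, s1 \in P i -> s2 \in P i ->
    on_path p (pi s1) (sg s1) x -> on_path p (pi s2) (sg s2) x -> s1 = s2.
  move=> i s1 s2 x h1 h2; apply: UR ht hg (PI _ _ h1) (PI _ _ h2) _.
  exact: Pcol h1 h2.
have injpi : forall i, {in P i &, injective pi}.
  move=> i s1 s2 h1 h2 e; apply: (URi i s1 s2 (pi s1) h1 h2).
    exact: onpath_l.
  by rewrite e; apply: onpath_l.
have injsg : forall i, {in P i &, injective sg}.
  move=> i s1 s2 h1 h2 e; apply: (URi i s1 s2 (sg s1) h1 h2).
    exact: onpath_r.
  by rewrite e; apply: onpath_r.
have leafpi : forall s, s \in inner r p -> pi s \in leaves r p.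
  by move=> s hs; have [] := arm_props ht hg hs.
have leafsg : forall s, s \in inner r p -> sg s \in leaves r p.
  by move=> s hs; have [] := arm_props ht (good_sym hg) hs.
exists (fun i => pi @: P i), (fun i => sg @: P i); split.
  move=> i; split.
  - by apply/subsetP => x /imsetP[s hs ->]; apply: leafpi (PI _ _ hs).
  - by apply/subsetP => x /imsetP[s hs ->]; apply: leafsg (PI _ _ hs).
  - rewrite -setI_eq0; apply/eqP/setP => x; rewrite !inE.
    apply/negbTE/negP => /andP[/imsetP[s1 h1 ->] /imsetP[s2 h2 e]].
    have e12 : s1 = s2.
      apply: (URi i s1 s2 (pi s1) h1 h2); first exact: onpath_l.
      by rewrite e; apply: onpath_r.
    subst s2; have hs := PI _ _ h1.
    have [_ _ a1 _] := arm_props ht hg hs.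
    have [_ _ a2 _] := arm_props ht (good_sym hg) hs.
    apply: (sep ht hg hs a1); rewrite /pi /pi_ in e; rewrite e; exact: a2.
  - by rewrite (card_in_imset (injpi i)) (card_in_imset (injsg i)).
exists P; split.
- move=> i j nij; rewrite -setI_eq0; apply/eqP/setP => s; rewrite !inE.
  apply/negbTE/negP => /andP[/andP[_ /eqP e1] /andP[_ /eqP e2]].
  by move: nij; rewrite -val_eqE /= -e1 -e2 eqxx.
- apply/setP => s; apply/bigcupP/idP => [[i _ /PI //] | hs].
  have hlt : col r p f g s < 4.
    by rewrite /col; case: (odd _); case: (odd _).
  exists (Ordinal hlt) => //; rewrite inE hs /=.
  by [].
- move=> i; split; first by apply/subsetP => s /PI.
  exists pi, sg; split => //; split; [exact: injpi | exact: injsg | | ].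
    move=> s hs; split; [exact: leafpi (PI _ _ hs) | exact: leafsg (PI _ _ hs) |].
    exact: lca_ok ht hg (PI _ _ hs).
  by move=> x s1 s2 h1 h2; apply: URi h1 h2.
Qed.
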